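(* Assume the setting described in the context. For every $W\in\mathrm{Stab}_\pi$, the sequence $\varphi_W$ is strongly stable.
   Context: Setting: $\Omega$ is a finite set and $F$ a finite set of flaws, each a nonempty subset of $\Omega$; $F_\sigma=\{f:\sigma\in f\}$. For $\sigma\in\Omega$ and $f\in F_\sigma$ there is a probability distribution $\rho(\cdot\mid f,\sigma)$ with support $A(f,\sigma)$. A walk is $\sigma_1\xrightarrow{w_1}\sigma_2\cdots\xrightarrow{w_t}\sigma_{t+1}$ with $w_i\in F_{\sigma_i}$ and $\sigma_{i+1}\in A(w_i,\sigma_i)$, with word $w_1\ldots w_t$. $\sim$ is a symmetric relation on $F$ (loops allowed), with $\Gamma(f)=\{g:f\sim g\}$, $\Gamma^+(f)=\Gamma(f)\cup\{f\}$ and unions over sets $\Gamma(S)$, $\Gamma^+(S)$. It is assumed that $(F,\sim)$ is a potential causality graph: for every step $\sigma\xrightarrow{f}\sigma'$, $F_{\sigma'}\subseteq(F_\sigma\setminus\{f\})\cup\Gamma(f)$. $S$ is independent if $f\not\sim g$ for distinct $f,g\in S$; $\mathrm{Ind}(F)$ is the family of independent sets. A sequence $(I_1,\ldots,I_s)$, $s\ge1$, is stable if $I_r\in\mathrm{Ind}(F)$ and $I_{r+1}\subseteq\Gamma^+(I_r)$. A word $W$ is stable if $W=W_1\ldots W_s$ (a unique partition) with nonempty words $W_r$ of distinct flaws whose flaw sets $I_r$ form a stable sequence. Then $\varphi_W=(I_1,\ldots,I_s)$, and $\varphi_W=(\varnothing)$ for the empty word. $W$ is $\pi$-stable if in addition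 each $W_r$ is strictly increasing in the order induced by a permutation $\pi$ of $F$. $\mathrm{Stab}_\pi$ is the set of $\pi$-stable words $W$ such that some walk has word $W$ or the reverse of $W$. A sequence $(I_1,\ldots,I_s)$ with $s\ge1$ is strongly stable if $I_r\in\mathrm{Ind}(F)$ for all $r$, $I_{r+1}\subseteq\Gamma(I_r)$ for $r\in[s-1]$, and $I_r\ne\varnothing$ for $r\in[2,s]$. *)

(* Defs.v *)
From mathcomp Require Import all_boot all_order all_algebra.
Set Implicit Arguments. Unset Strict Implicit. Unset Printing Implicit Defensive.
Import GRing.Theory Num.Theory.

Section FlawsSetting.
Variables (R : realFieldType) (Omega Fl : finType).
Variable fl : Fl -> {set Omega}.
Variable rho : Fl -> Omega -> Omega -> R. (* rho f sigma sigma' = rho(sigma' | f, sigma) *)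
Variable sim : rel Fl.

Definition Fat (s : Omega) : {set Fl} := [set f | s \in fl f].

Definition Aset (f : Fl) (s : Omega) : {set Omega} := [set s' | rho f s s' != 0%R].

Definition is_distribution : Prop :=
  forall f s, s \in fl f ->
    (forall s', (0 <= rho f s s')%R) /\ (\sum_(s' : Omega) rho f s s' = 1)%R.

Definition Gam (f : Fl) : {set Fl} := [set g | sim f g].
Definition GamPlus (f : Fl) : {set Fl} := f |: Gam f.
Definition GamS (S : {set Fl}) : {set Fl} := \bigcup_(f in S) Gam f.
Definition GamPlusS (S : {set Fl}) : {set Fl} := GamS S :|: S.

Definition potential_causality : Prop :=
  forall s f s', f \in Fat s -> s' \in Aset f s ->
    Fat s' \subset (Fat s :\ f) :|: Gam f.

Definition indep (S : {set Fl}) : Prop :=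
  forall f g, f \in S -> g \in S -> f != g -> ~~ sim f g.

Definition stable_seq (Is : seq {set Fl}) : Prop :=
  [/\ (0 < size Is)%N,
      (forall I, I \in Is -> indep I) &
      (forall r, (r.+1 < size Is)%N -> nth set0 Is r.+1 \subset GamPlusS (nth set0 Is r))].

Definition strongly_stable (Is : seq {set Fl}) : Prop :=
  [/\ (0 < size Is)%N,
      (forall I, I \in Is -> indep I),
      (forall r, (r.+1 < size Is)%N -> nth set0 Is r.+1 \subset GamS (nth set0 Is r)) &
      (forall r, (0 < r)%N -> (r < size Is)%N -> nth set0 Is r != set0)].

Fixpoint walk_from (s : Omega) (W : seq Fl) : bool :=
  match W with
  | [::] => true
  | f :: W' => (f \in Fat s) && [exists s' : Omega, (s' \in Aset f s) && walk_from s' W']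
  end.

Definition has_walk (W : seq Fl) : Prop := exists s : Omega, walk_from s W.

Definition block_set (b : seq Fl) : {set Fl} := [set x in b].

(* phi of a partition W = W_1 ... W_s; the empty word (empty partition) gives (emptyset) *)
Definition phi_of (Ws : seq (seq Fl)) : seq {set Fl} :=
  if Ws is [::] then [:: set0] else map block_set Ws.

(* the permutation pi of F, given as the rank of each flaw; induced order *)
Definition pi_lt (pi : Fl -> 'I_#|Fl|) (x y : Fl) : bool := (pi x < pi y)%N.

Definition pi_stable_partition (pi : Fl -> 'I_#|Fl|) (W : seq Fl) (Ws : seq (seq Fl)) : Prop :=
  [/\ flatten Ws = W,
      (forall b, b \in Ws -> [/\ b != [::], uniq b & sorted (pi_lt pi) b]) &
      stable_seq (phi_of Ws)].

Definition pi_stable (pi : Fl -> 'I_#|Fl|) (W : seq Fl) : Prop :=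
  exists Ws, pi_stable_partition pi W Ws.

Definition in_Stab (pi : Fl -> 'I_#|Fl|) (W : seq Fl) : Prop :=
  pi_stable pi W /\ (has_walk W \/ has_walk (rev W)).

End FlawsSetting.

(* Main.v *)
Require Import Defs.
From mathcomp Require Import all_boot all_order all_algebra.
Set Implicit Arguments. Unset Strict Implicit.

Section Helpers.
Variables (R : realFieldType) (Omega Fl : finType).
Variable fl : Fl -> {set Omega}.
Variable rho : Fl -> Omega -> Omega -> R.
Variable sim : rel Fl.
Hypothesis PC : potential_causality fl rho sim.

Lemma walk_cat_r s P Q : walk_from fl rho s (P ++ Q) -> exists s', walk_from fl rho s' Q.
Proof.
elim: P s => [|f P IH] s /=; first by exists s.
case/andP=> _ /existsP [s' /andP [_ Hw]]; exact: IH Hw.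
Qed.

Lemma absent g s Q T : walk_from fl rho s (Q ++ T) -> g \notin Fat fl s ->
  (forall h, h \in Q -> ~~ sim h g) -> g \notin Q.
Proof.
elim: Q s => [|h Q IH] s //= /andP [hF /existsP [s' /andP [Hs' Hw]]] gF Hh.
rewrite in_cons negb_or; apply/andP; split.
  by apply/eqP=> E; move: gF; rewrite E hF.
apply: (IH s' Hw) => [|x xQ]; last by apply: Hh; rewrite in_cons xQ orbT.
apply/negP=> gF'.
have := subsetP (PC hF Hs') g gF'.
rewrite !inE; case/orP.
  by case/andP=> _ H; move: gF; rewrite /Fat inE H.
by move=> H; move: (Hh h (mem_head _ _)); rewrite H.
Qed.

Lemma key g s P Q T : walk_from fl rho s (P ++ g :: Q ++ T) ->
  (forall h, h \in Q -> ~~ sim h g) -> g \notin Q.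
Proof.
move=> Hw Hh; apply/negP=> gQ.
have ngg := Hh g gQ.
case: (walk_cat_r Hw) => s0 /= /andP [gF /existsP [s' /andP [Hs' Hw']]].
have gF' : g \notin Fat fl s'.
  apply/negP=> gF'; have := subsetP (PC gF Hs') g gF'.
  by rewrite !inE eqxx /= (negbTE ngg).
by move: (absent Hw' gF' Hh); rewrite gQ.
Qed.
End Helpers.

Theorem proposition9 (R : realFieldType) (Omega Fl : finType)
  (fl : Fl -> {set Omega}) (rho : Fl -> Omega -> Omega -> R) (sim : rel Fl)
  (pi : Fl -> 'I_#|Fl|) :
  injective fl ->
  (forall f, fl f != set0) ->
  is_distribution fl rho ->
  (forall f g, sim f g = sim g f) ->
  potential_causality fl rho sim ->
  injective pi ->
  forall W : seq Fl, in_Stab fl rho sim pi W ->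
  forall Ws : seq (seq Fl), pi_stable_partition sim pi W Ws ->
  strongly_stable sim (phi_of Ws).
Proof.
move=> _ _ _ _ PC _ W [_ Hwalk] Ws [EW Hb [Hsz Hind Hsub]].
case: Ws EW Hb Hsz Hind Hsub => [|b0 Ws'] EW Hb Hsz Hind Hsub.
  split => //; by case => [|[]].
set Ws := b0 :: Ws' in EW Hb Hsz Hind Hsub *.
have Ephi : phi_of Ws = map (@block_set Fl) Ws by [].
rewrite Ephi in Hsz Hind Hsub *.
split => //.
- move=> r; rewrite size_map => Hr.
  have Hr' : (r < size Ws)%N by apply: ltn_trans Hr.
  rewrite (nth_map [::] set0 (@block_set Fl)) // (nth_map [::] set0 (@block_set Fl)) //.
  have := Hsub r; rewrite size_map => /(_ Hr).
  rewrite (nth_map [::] set0 (@block_set Fl)) // (nth_map [::] set0 (@block_set Fl)) //.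
  set br := nth [::] Ws r; set bs := nth [::] Ws r.+1 => Hs.
  apply/subsetP => g gs.
  have := subsetP Hs g gs; rewrite /GamPlusS inE; case/orP => // gr.
  case: (boolP (g \in GamS sim (block_set br))) => // nG; exfalso.
  have nG' : forall h, h \in br -> ~~ sim h g.
    move=> h hr; apply/negP => shg; move/negP: nG; apply.
    by apply/bigcupP; exists h; rewrite ?inE.
  have Ind : indep sim (block_set bs).
    by apply: Hind; apply/mapP; exists bs => //; apply: mem_nth.
  rewrite inE in gr; rewrite inE in gs.
  have Hh : forall h, (h \in br) || (h \in bs) -> ~~ sim h g.
    move=> h /orP [] hin; first exact: nG'.
    case: (eqVneq h g) => [->|hg]; first exact: nG'.
    by apply: (Ind h g); rewrite ?inE.
  have EWs : W = flatten (take r Ws) ++ br ++ bs ++ flatten (drop r.+2 Ws).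
    rewrite -EW -{1}(cat_take_drop r Ws) flatten_cat (drop_nth [::] Hr').
    by rewrite (drop_nth [::] Hr) /=.
  case: Hwalk => [[s Hw]|[s Hw]].
  + have [x [y Ebr]] : exists x y, br = x ++ g :: y.
      by move: gr; case/splitPr => x y; exists x, y.
    rewrite Ebr in EWs.
    have Hw' : walk_from fl rho s ((flatten (take r Ws) ++ x) ++ g :: (y ++ bs) ++ flatten (drop r.+2 Ws)).
      by move: Hw; rewrite EWs -?catA /= -?catA.
    suff: g \notin y ++ bs by rewrite mem_cat gs orbT.
    apply: (key PC Hw') => h; rewrite mem_cat => /orP [] hin.
      by apply: Hh; rewrite Ebr mem_cat in_cons hin !orbT.
    by apply: Hh; rewrite hin orbT.
  + have gs' : g \in rev bs by rewrite mem_rev.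
    have [x [y Erev]] : exists x y, rev bs = x ++ g :: y.
      by move: gs'; case/splitPr => x y; exists x, y.
    have Hw' : walk_from fl rho s ((rev (flatten (drop r.+2 Ws)) ++ x) ++ g :: (y ++ rev br) ++ rev (flatten (take r Ws))).
      by move: Hw; rewrite EWs !rev_cat Erev -?catA /= -?catA.
    suff: g \notin y ++ rev br by rewrite mem_cat mem_rev gr orbT.
    apply: (key PC Hw') => h; rewrite mem_cat => /orP [] hin.
      apply: Hh; apply/orP; right; by rewrite -mem_rev Erev mem_cat in_cons hin !orbT.
    by apply: Hh; rewrite -mem_rev hin.
- move=> r r0; rewrite size_map => Hr.
  rewrite (nth_map [::] set0 (@block_set Fl)) //.
  have := Hb _ (mem_nth [::] Hr); case=> ne _ _.
  case: (nth [::] Ws r) ne => // a l _.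
  by apply/set0Pn; exists a; rewrite inE mem_head.
Qed.
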